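(* Let $r\ge1$ and let $\gamma_1,\dots,\gamma_{r+1},p_1,\dots,p_{r+1},a_1,\dots,a_{r+1}$ be indeterminates. Let $\mathrm{Wr}$ denote the relations (coefficientwise in $z$) $$\det_{1\le i,j\le r+1}\big[(\gamma_i+\partial_z)^{j-1}(z-p_i)\big]=\det_{1\le i,j\le r+1}\big[z\gamma_i^{j-1}-p_i\gamma_i^{j-1}+(j-1)\gamma_i^{j-2}\big]=c\prod_{i=1}^{r+1}(z-a_i),\qquad c=\prod_{i<j}(\gamma_j-\gamma_i),$$ and set ${\rm Fun}(r{\rm Op}_Z^{\Lambda})=\mathbb{C}(\gamma_i,p_i,a_i)/\mathrm{Wr}$. Let $t=(t_{ij})_{i,j=1}^{r+1}$ be the rational Calogero–Moser Lax matrix $$t_{ii}=p_i-\sum_{j\neq i}\frac{1}{\gamma_i-\gamma_j},\qquad t_{ij}=\frac{1}{\gamma_i-\gamma_j}\cdot\frac{\prod_{k\neq i}(\gamma_i-\gamma_k)}{\prod_{l\neq j}(\gamma_j-\gamma_l)}\ (i\neq j),$$ and define the rCM Hamiltonians by $\det(z-t)=\sum_k H^{rCM}_k(\{\gamma_i\},\{p_i\})z^k$. Then there is an isomorphism of algebras $${\rm Fun}(r{\rm Op}_Z^{\Lambda})\cong\mathbb{C}(\gamma_i,p_i,a_i)\Big/\Big(\text{relations }\det(z-t)=\prod_{i=1}^{r+1}(z-a_i)\text{ coefficientwise in }z\Big).$$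
   Context: ${\rm Fun}(r{\rm Op}_Z^{\Lambda})$ is the algebra of functions on the space of canonical rationally $Z$-twisted Miura $SL(r+1)$-opers on $\mathbb{P}^1$: $Z=\mathrm{diag}(\gamma_1,\dots,\gamma_{r+1})$ is regular semisimple, the oper connection is gauge equivalent to $\partial_z+Z$, the section of the line subbundle has components $s_i(z)=z-p_i$ (degree one, monic), and the only regular singularities are the distinct roots $a_i$ of $\Lambda(z)=\mathcal{D}_{r+1}(z)$, where $\mathcal{D}_{r+1}$ is the twisted Wronskian $\det[(\gamma_i+\partial_z)^{j-1}s_i]$; this gives the relation $\mathrm{Wr}$. *)

(* Defs.v *)
(* multinomials (mpoly), fraction fields, real-closed complex,
   and mathcomp-reals' realType (any realType is isomorphic to the reals, so
   complex R is the field of complex numbers). *)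
From HB Require Import structures.
From mathcomp Require Import all_boot all_order all_algebra.
From mathcomp Require Import fraction.
From mathcomp Require Import mpoly.
From mathcomp Require Import complex.
From mathcomp Require Import reals.

Set Implicit Arguments.
Unset Strict Implicit.
Unset Printing Implicit Defensive.

Import Order.TTheory GRing.Theory Num.Theory.
Local Open Scope ring_scope.

Section RCM.
Variables (K : fieldType) (n : nat).

Definition GamField := {fraction {mpoly K[n]}}.

(* The ring K(gamma)[p_1..p_n, a_1..a_n]; variable lshift n i is p_i,
   variable rshift n i is a_i. *)
Definition Alg := {mpoly GamField[n + n]}.

Definition gam (i : 'I_n) : GamField := @FracField.tofrac _ ('X_i : {mpoly K[n]}).
Definition gamA (i : 'I_n) : Alg := (gam i)%:MP.
Definition pA (i : 'I_n) : Alg := 'X_(lshift n i).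
Definition aA (i : 'I_n) : Alg := 'X_(rshift n i).

Definition vdmC : Alg :=
  (\prod_(i < n) \prod_(j < n | (i < j)%N) (gam j - gam i))%:MP.

(* Twisted Wronskian matrix [(gamma_i + d/dz)^(j-1) (z - p_i)] (j 0-indexed). *)
Definition twistOp (g : Alg) (q : {poly Alg}) : {poly Alg} := g *: q + q^`().

Definition wronskMx : 'M[{poly Alg}]_n :=
  \matrix_(i < n, j < n) iter j (twistOp (gamA i)) ('X - (pA i)%:P).

Definition Lambda : {poly Alg} := \prod_(i < n) ('X - (aA i)%:P).

Definition WrPoly : {poly Alg} := \det wronskMx - vdmC%:P * Lambda.

Definition laxMx : 'M[Alg]_n :=
  \matrix_(i < n, j < n)
    if i == j then pA i - (\sum_(k < n | k != i) (gam i - gam k)^-1)%:MP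
    else ((gam i - gam j)^-1 *
          (\prod_(k < n | k != i) (gam i - gam k)) /
          (\prod_(l < n | l != j) (gam j - gam l)))%:MP.

Definition CMPoly : {poly Alg} := char_poly laxMx - Lambda.

End RCM.

Definition in_coef_ideal (A : comRingType) (q : {poly A}) (f : A) : Prop :=
  exists g : 'I_(size q) -> A, f = \sum_(i < size q) g i * q`_i.

(* Main.v *)
Require Import Defs.
From HB Require Import structures.
From mathcomp Require Import all_boot all_order all_algebra.
From mathcomp Require Import fraction mpoly complex reals.
From mathcomp Require Import ring.
Set Implicit Arguments.
Unset Strict Implicit.
Import GRing.Theory.
Local Open Scope ring_scope.

Section Lag.
Variables (F : fieldType) (n : nat) (g : 'I_n -> F).
Hypothesis ginj : injective g.

Lemma gsub_neq0 i k : k != i -> g i - g k != 0.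
Proof. by move=> ki; rewrite subr_eq0; apply/eqP=> /ginj /eqP; rewrite eq_sym (negbTE ki). Qed.

Definition ww i := \prod_(k < n | k != i) (g i - g k).
Lemma ww_neq0 i : ww i != 0.
Proof. by apply/prodf_neq0 => k; apply: gsub_neq0. Qed.

Definition Amat i k :=
  if i == k then \sum_(l < n | l != i) (g i - g l)^-1
  else (g i - g k)^-1 * ww i / ww k.

Lemma Amat_ii i : Amat i i = \sum_(l < n | l != i) (g i - g l)^-1.
Proof. by rewrite /Amat eqxx. Qed.
Lemma Amat_ij i k : i != k -> Amat i k = (g i - g k)^-1 * ww i / ww k.
Proof. by rewrite /Amat => /negbTE ->. Qed.

Definition PP k : {poly F} := \prod_(l < n | l != k) ('X - (g l)%:P).

Lemma PP_eval k m : (PP k).[g m] = if m == k then ww k else 0.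
Proof.
rewrite /PP horner_prod; case: eqP => [->|/eqP mk].
  by apply: eq_bigr => l _; rewrite hornerXsubC.
by rewrite (bigD1 m) //= hornerXsubC subrr mul0r.
Qed.

Lemma size_PP k : (size (PP k) <= n)%N.
Proof.
rewrite /PP size_prod; last by move=> i _; rewrite polyXsubC_eq0.
rewrite (eq_bigr (fun _ => 2%N)); last by move=> i _; rewrite size_XsubC.
rewrite sum_nat_const.
have -> : #|[pred l | l != k]| = n.-1.
  by rewrite -[in RHS](card_ord n) -(cardC1 k); apply: eq_card.
case: (n) k => [[]//|m] _ /=; rewrite mulnC /=.
by rewrite mul2n -addnn -addSn addnK.
Qed.

Lemma logder (I : Type) (s : seq I) (P : pred I) (c : I -> F) x :
  (forall l, P l -> x - c l != 0) ->
  (\prod_(l <- s | P l) ('X - (c l)%:P))^`().[x] =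
  (\prod_(l <- s | P l) (x - c l)) * \sum_(l <- s | P l) (x - c l)^-1.
Proof.
move=> hx; elim: s => [|a s IH]; first by rewrite !big_nil mulr0 -polyC1 derivC horner0.
rewrite !big_cons; case: ifP => // Pa.
rewrite derivM derivXsubC mul1r hornerD hornerM hornerXsubC IH horner_prod.
have ha := hx a Pa.
rewrite (eq_bigr (fun l => x - c l)); last by move=> l _; rewrite hornerXsubC.
by rewrite mulrDr mulrA; congr (_ + _); rewrite mulrAC mulfV // mul1r.
Qed.

Lemma PPder_ii i : (PP i)^`().[g i] = ww i * \sum_(l < n | l != i) (g i - g l)^-1.
Proof.
rewrite /PP logder; first by [].
by move=> l; apply: gsub_neq0.
Qed.

Lemma PPder_ki k i : k != i -> (PP k)^`().[g i] = ww i / (g i - g k).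
Proof.
move=> ki; rewrite /PP (bigD1 i) 1?eq_sym //= derivM derivXsubC mul1r.
rewrite hornerD hornerM hornerXsubC subrr mul0r addr0 horner_prod.
rewrite /ww [in RHS](bigD1 k) //= mulrAC mulfV ?mul1r; last by apply: gsub_neq0.
by apply: eq_big => [l|l _]; [rewrite andbC | rewrite hornerXsubC].
Qed.

Lemma lagrange (f : {poly F}) : (size f <= n)%N ->
  f = \sum_(k < n) (f.[g k] / ww k) *: PP k.
Proof.
move=> sf; apply/eqP; rewrite -subr_eq0; apply/eqP.
set D := _ - _.
have rD : all (root D) (map g (enum 'I_n)).
  apply/allP => x /mapP [m _ ->]; rewrite /root /D hornerD hornerN horner_sum.
  rewrite (bigD1 m) //= hornerZ PP_eval eqxx mulfVK ?ww_neq0 //.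
  rewrite big1 ?addr0 ?subrr // => k km; rewrite hornerZ PP_eval eq_sym (negbTE km) mulr0 //.
apply/eqP; apply/negPn/negP => Dn0.
have := max_poly_roots Dn0 rD.
rewrite map_inj_uniq ?enum_uniq // => /(_ isT).
rewrite size_map size_enum_ord; apply/negP; rewrite -leqNgt.
rewrite /D; apply: (leq_trans (size_polyD _ _)); rewrite geq_max sf size_polyN.
apply: (leq_trans (size_sum _ _ _)); apply/bigmax_leqP => k _.
by apply: (leq_trans (size_scale_leq _ _)); apply: size_PP.
Qed.

Lemma core i (j : nat) : (j < n)%N ->
  \sum_(k < n) Amat i k * g k ^+ j = g i ^+ j.-1 *+ j.
Proof.
move=> jn.
have := (@lagrange 'X^j); rewrite size_polyXn => /(_ jn) /(congr1 (fun p => p^`().[g i])).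
rewrite derivXn hornerMn hornerXn => ->.
rewrite raddf_sum horner_sum; apply: eq_bigr => k _.
rewrite /= derivZ hornerZ hornerXn /Amat.
case: eqP => [<-|/eqP ik].
  by rewrite PPder_ii mulrC mulrA mulfVK ?ww_neq0 // mulrC.
rewrite PPder_ki 1?eq_sym //. 
by ring.
Qed.
End Lag.

Lemma aux1 (A : comRingType) (a x : {poly A}) (p c : A) :
  a * (x - (p - c)%:P) = (1 * (x - p%:P) + c%:P) * a.
Proof. rewrite polyCB; by ring. Qed.
Lemma aux2 (A : comRingType) (a x y z w b : {poly A}) :
  a * - y = w * b -> a * (x *+ false - y) = (false%:R * z + w) * b.
Proof. move=> h; have -> : x *+ false = 0 by []. have -> : false%:R * z = 0 by rewrite mul0r. by rewrite !add0r h. Qed.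

Lemma aux3 (F : fieldType) (wi wj gi gj : F) :
  wi != 0 -> wj != 0 -> gi - gj != 0 ->
  wi ^+ 2 * - ((gj - gi)^-1 * wj / wi) = (gi - gj)^-1 * wi / wj * wj ^+ 2.
Proof.
move=> hi hj hij.
have hji : gj - gi != 0 by rewrite -opprB oppr_eq0.
by field; rewrite hi hj hij hji.
Qed.

Section Main.
Variables (K : fieldType) (n : nat).

Lemma gam_inj : injective (@gam K n).
Proof.
move=> i j /eqP; rewrite /gam tofrac_eq => /eqP /(congr1 (fun p => p@_U_(i))).
rewrite !mcoeffXU eqxx; case: eqP => // _ /eqP. by rewrite mulr1n mulr0n oner_eq0.
Qed.

Definition iota (x : GamField K n) : {poly Alg K n} := ((x%:MP : Alg K n)%:P).

Lemma iotaD x y : iota (x + y) = iota x + iota y.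
Proof. by rewrite /iota mpolyCD polyCD. Qed.
Lemma iotaM x y : iota (x * y) = iota x * iota y.
Proof. by rewrite /iota mpolyCM polyCM. Qed.
Lemma iotaN x : iota (- x) = - iota x.
Proof. by rewrite /iota mpolyCN polyCN. Qed.
Lemma iotaB x y : iota (x - y) = iota x - iota y.
Proof. by rewrite iotaD iotaN. Qed.
Lemma iotaX x j : iota (x ^+ j) = iota x ^+ j.
Proof. by rewrite /iota -rmorphXn /= -rmorphXn. Qed.
Lemma iotaMn x j : iota (x *+ j) = iota x *+ j.
Proof. by rewrite /iota -rmorphMn /= -rmorphMn. Qed.
Lemma iota_sum (I : Type) (r : seq I) (P : pred I) (f : I -> GamField K n) :
  iota (\sum_(i <- r | P i) f i) = \sum_(i <- r | P i) iota (f i).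
Proof. by apply: big_morph; [exact: iotaD | rewrite /iota !raddf0]. Qed.
Lemma iota_prod (I : Type) (r : seq I) (P : pred I) (f : I -> GamField K n) :
  iota (\prod_(i <- r | P i) f i) = \prod_(i <- r | P i) iota (f i).
Proof. by apply: big_morph; [exact: iotaM | rewrite /iota !rmorph1]. Qed.
Lemma iota_eq0 x : (iota x == 0) = (x == 0).
Proof. by rewrite /iota polyC_eq0 mpolyC_eq0. Qed.

Lemma iter_twist (g : Alg K n) (p : Alg K n) j :
  iter j (twistOp g) ('X - p%:P) = g ^+ j *: ('X - p%:P) + (g ^+ j.-1 *+ j)%:P.
Proof.
elim: j => [|j IH]; first by rewrite /= expr0 scale1r mulr0n addr0.
rewrite iterS IH /twistOp derivD derivZ derivXsubC derivC addr0 alg_polyC.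
rewrite scalerDr scalerA -exprS -addrA; congr (_ + _).
rewrite -mul_polyC -polyCM -polyCD; congr (_%:P).
case: j {IH} => [|j]; first by rewrite /= mulr0n mulr0 add0r mulr1n.
by rewrite /= mulrnAr -exprS [in RHS]mulrSr.
Qed.

Definition Vm : 'M[{poly Alg K n}]_n := \matrix_(i, j) iota (gam K i ^+ j).
Definition Mm : 'M[{poly Alg K n}]_n :=
  \matrix_(i, k) ((i == k)%:R * ('X - (@pA K n i)%:P) + iota (Amat (gam K (n:=n)) i k)).

Lemma W_eq : wronskMx K n = Mm *m Vm.
Proof.
apply/matrixP => i j; rewrite !mxE iter_twist.
rewrite (eq_bigr (fun k => (i == k)%:R * ('X - (@pA K n i)%:P) * iota (gam K k ^+ j)
   + iota (Amat (gam K (n:=n)) i k * gam K k ^+ j))); last first.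
  by move=> k _; rewrite !mxE mulrDl iotaM.
set X' := ('X - (@pA K n i)%:P).
have -> : \sum_k ((i == k)%:R * X' * iota (gam K k ^+ j)
   + iota (Amat (gam K (n:=n)) i k * gam K k ^+ j)) =
   \sum_k ((i == k)%:R * X' * iota (gam K k ^+ j)) +
   \sum_k iota (Amat (gam K (n:=n)) i k * gam K k ^+ j).
  by rewrite big_split.
have -> : \sum_k ((i == k)%:R * X' * iota (gam K k ^+ j)) = X' * iota (gam K i ^+ j).
  rewrite (bigD1 i) // big1 ?addr0; last first.
    by move=> k /negbTE; rewrite eq_sym => ->; rewrite !mul0r.
  by rewrite eqxx mul1r; apply: addr0.
rewrite -iota_sum (core gam_inj i (ltn_ord j)).
rewrite iotaMn iotaX -mul_polyC mulrC; congr (_ * _ + _).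
  by rewrite rmorphXn.
by rewrite iotaX rmorphMn rmorphXn.
Qed.

Lemma detV : \det Vm = (vdmC K n)%:P.
Proof.
have -> : Vm = (Vandermonde n (\row_i iota (gam K i)))^T.
  by apply/matrixP => i j; rewrite !mxE iotaX.
rewrite det_tr det_Vandermonde /vdmC -/(iota _) iota_prod.
apply: eq_bigr => i _; rewrite iota_prod; apply: eq_bigr => j _.
by rewrite !mxE iotaB.
Qed.

Definition Sm : 'M[{poly Alg K n}]_n :=
  diag_mx (\row_i iota (ww (@gam K n) i ^+ 2)).

Lemma S_eq : Sm *m (char_poly_mx (laxMx K n))^T = Mm *m Sm.
Proof.
apply/matrixP => i j; rewrite mul_diag_mx mul_mx_diag !mxE.
case: (eqVneq i j) => [<-|ij].
  rewrite mulr1n Amat_ii; exact: aux1.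
apply: aux2.
rewrite -iotaN -!iotaM; congr iota.
rewrite Amat_ij //.
have hi : ww (@gam K n) i != 0 by apply: ww_neq0; apply: gam_inj.
have hj : ww (@gam K n) j != 0 by apply: ww_neq0; apply: gam_inj.
have hij : gam K i - gam K j != 0 by apply: gsub_neq0; [apply: gam_inj | rewrite eq_sym].
have hji : gam K j - gam K i != 0 by apply: gsub_neq0; [apply: gam_inj | ].
exact: (aux3 hi hj hij).
Qed.

Lemma detM : \det Mm = char_poly (laxMx K n).
Proof.
have := congr1 determinant S_eq; rewrite !det_mulmx det_tr mulrC => /eqP.
rewrite (inj_eq (mulIf _)) => [/eqP <- //|].
rewrite det_diag; apply/prodf_neq0 => i _; rewrite mxE iota_eq0 expf_neq0 //.
by apply: ww_neq0; apply: gam_inj.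
Qed.

Lemma WrE : WrPoly K n = vdmC K n *: CMPoly K n.
Proof.
rewrite /WrPoly /CMPoly W_eq det_mulmx detM detV -mul_polyC.
by rewrite mulrBr mulrC.
Qed.

Lemma vdmC_inv : exists c', c' * vdmC K n = 1.
Proof.
exists ((\prod_(i < n) \prod_(j < n | (i < j)%N) (gam K j - gam K i))^-1)%:MP.
rewrite /vdmC -mpolyCM mulVf ?mpolyC1 //.
apply/prodf_neq0 => i _; apply/prodf_neq0 => j ij.
apply: gsub_neq0; first by apply: gam_inj.
by rewrite neq_ltn ij.
Qed.

End Main.

Lemma cidE (A : comRingType) (q : {poly A}) f :
  in_coef_ideal q f <-> exists h : nat -> A, f = \sum_(i < size q) h i * q`_i.
Proof.
split => [[g ->]|[h ->]]; last by exists (fun i => h i).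
exists (fun i => if insub i is Some j then g j else 0).
by apply: eq_bigr => i _; rewrite (valK i).
Qed.

Lemma cid_scale (A : comRingType) (c c' : A) (q : {poly A}) f :
  c' * c = 1 -> in_coef_ideal (c *: q) f <-> in_coef_ideal q f.
Proof.
move=> hc.
have sz : size (c *: q) = size q.
  apply/eqP; rewrite eqn_leq size_scale_leq /=.
  by have := size_scale_leq c' (c *: q); rewrite scalerA hc scale1r.
rewrite !cidE sz; split => [[h ->]|[h ->]].
  by exists (fun i => h i * c); apply: eq_bigr => i _; rewrite coefZ mulrA.
exists (fun i => h i * c'); apply: eq_bigr => i _; rewrite coefZ.
by rewrite mulrA -(mulrA (h i)) hc mulr1.
Qed.

(* The ideals Wr and (det(z - t) = prod (z - a_i)) of C(gamma)[p, a] coincide,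
   so the identity induces the algebra isomorphism of the two quotients. *)
Theorem mainTheorem5 (R : realType) (r : nat) (hr : (1 <= r)%N)
    (f : Alg (R[i])%C r.+1) :
  in_coef_ideal (WrPoly (R[i])%C r.+1) f <-> in_coef_ideal (CMPoly (R[i])%C r.+1) f.
Proof.
have [c' hc] := vdmC_inv (R[i])%C r.+1.
by rewrite WrE; apply: cid_scale hc.
Qed.
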